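(* Let $\pi$ be a distribution on $\mathbb{R}^d$ with positive definite covariance $\Sigma$, precision $Q=\Sigma^{-1}=(Q_{ij})_{i,j=1}^s$ in block form. For $w\in\Delta_s:=\{w\in\mathbb{R}^s: w_i>0,\ 1-w_1-\dots-w_s>0\}$ define $$f(w)=\lambda_{\min}(D^{\rm ext}_wQ^{\rm ext}),\quad Q^{\rm ext}=\mathrm{diag}(Q,1),\quad D^{\rm ext}_w=\mathrm{diag}\Big(D_w,\ 1-\sum_{i=1}^sw_i\Big),$$ where $D_w=\mathrm{diag}(w_1(Q_{11})^{-1},\dots,w_s(Q_{ss})^{-1})$. Let $w^\star\in\Delta_s$ be a maximiser of $f$ over $\Delta_s$. Then the pseudo-optimal weights are $p^{\mathrm{opt}}_j=w^\star_j/(w^\star_1+\dots+w^\star_s)$, $j=1,\dots,s$, and $$\mathrm{PG}(p^{\mathrm{opt}})=\frac{f(w^\star)}{w^\star_1+\dots+w^\star_s}.$$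
   Context: For a probability vector $p$ with positive entries, the pseudo-spectral gap is $\mathrm{PG}(p)=\lambda_{\min}(D_pQ)$ with $D_p=\mathrm{diag}(p_1(Q_{11})^{-1},\dots,p_s(Q_{ss})^{-1})$ (block diagonal, $d\times d$), and the pseudo-optimal weights $p^{\mathrm{opt}}$ are the (unique) maximiser of $\mathrm{PG}$ over probability vectors with positive entries. $\lambda_{\min}$ denotes the smallest eigenvalue. *)

(* Defs.v *)
From HB Require Import structures.
From mathcomp Require Import all_boot all_order all_algebra.
From mathcomp Require Import classical_sets reals.
Set Implicit Arguments. Unset Strict Implicit. Unset Printing Implicit Defensive.
Import Order.TTheory GRing.Theory Num.Theory.
Local Open Scope ring_scope.
Local Open Scope classical_set_scope.

(* Smallest (real) eigenvalue of a square real matrix.  For the matrices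
   used below (D Q with D, Q positive definite) all eigenvalues are real,
   so this is the smallest eigenvalue. *)
Definition lambda_min (R : realType) (m : nat) (A : 'M[R]_m) : R :=
  inf [set a : R | eigenvalue A a].

Definition posdef (R : realType) (m : nat) (A : 'M[R]_m) : Prop :=
  A^T = A /\ forall x : 'rV[R]_m, x != 0 -> 0 < (x *m A *m x^T) 0 0.

Definition Dblock (R : realType) (s : nat) (n : 'I_s -> nat)
  (Q : 'M[R]_(\sum_(i < s) n i)) (p : 'I_s -> R) : 'M[R]_(\sum_(i < s) n i) :=
  \mxdiag_(i < s) (p i *: invmx (submxblock Q i i)).

Definition PG (R : realType) (s : nat) (n : 'I_s -> nat)
  (Q : 'M[R]_(\sum_(i < s) n i)) (p : 'I_s -> R) : R :=
  lambda_min (Dblock Q p *m Q).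

Definition posprob (R : realType) (s : nat) (p : 'I_s -> R) : Prop :=
  (forall i, 0 < p i) /\ \sum_(i < s) p i = 1.

Definition Delta (R : realType) (s : nat) (w : 'I_s -> R) : Prop :=
  (forall i, 0 < w i) /\ 0 < 1 - \sum_(i < s) w i.

Definition fext (R : realType) (s : nat) (n : 'I_s -> nat)
  (Q : 'M[R]_(\sum_(i < s) n i)) (w : 'I_s -> R) : R :=
  lambda_min (block_mx (Dblock Q w) 0 0 (1 - \sum_(i < s) w i)%:M
              *m block_mx Q 0 0 (1%:M : 'M[R]_1)).

(* Main.v *)
Require Import Defs.
From HB Require Import structures.
From mathcomp Require Import all_boot all_order all_algebra.
From mathcomp Require Import boolp classical_sets reals.
From mathcomp Require Import complex polyrcf.
From mathcomp Require Import ring lra.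
Import Order.TTheory GRing.Theory Num.Theory.
Local Open Scope ring_scope.

Section Mx.
Variable R : realType.
Lemma eigE n (A : 'M[R]_n) x : eigenvalue A x = (\det (A - x%:M) == 0).
Proof.
by rewrite /eigenvalue /eigenspace kermx_eq0 row_free_unit unitmxE unitfE negbK.
Qed.

Lemma eig_tr n (A : 'M[R]_n) x : eigenvalue A^T x = eigenvalue A x.
Proof. by rewrite !eigE -[\det (A - _)]det_tr linearB /= tr_scalar_mx. Qed.

Local Notation Re := (@complex.Re R).
Local Notation Im := (@complex.Im R).

Lemma ReS (I : finType) (F : I -> R[i]) : Re (\sum_i F i) = \sum_i Re (F i).
Proof. elim/big_rec2: _ => // i x y _ <-; by case: (F i) y => ? ? [? ?]. Qed.
Lemma ImS (I : finType) (F : I -> R[i]) : Im (\sum_i F i) = \sum_i Im (F i).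
Proof. elim/big_rec2: _ => // i x y _ <-; by case: (F i) y => ? ? [? ?]. Qed.

Lemma ReM (z w : R[i]) : Re (z * w) = Re z * Re w - Im z * Im w.
Proof. by case: z w => ? ? [? ?]. Qed.
Lemma ImM (z w : R[i]) : Im (z * w) = Re z * Im w + Im z * Re w.
Proof. by case: z w => ? ? [? ?]. Qed.

Lemma real_eig N (Q D : 'M[R]_N) : (0 < N)%N -> Q^T = Q -> D^T = D ->
  (forall x : 'rV_N, x != 0 -> 0 < (x *m Q *m x^T) 0 0) ->
  exists a, eigenvalue (D *m Q) a.
Proof.
move=> N0 QT DT Qpd.
pose M := Q *m D.
have [l /eigenvalueP [v vM v0]] := Theorem7' (map_mx (real_complex R) M) N0.
pose a := \row_j Re (v 0 j); pose b := \row_j Im (v 0 j).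
case: l vM => al be vM.
have Ea : a *m M = al *: a - be *: b.
  apply/rowP => j; have := congr1 (fun m : 'rV[R[i]]_N => Re (m 0 j)) vM.
  rewrite !mxE ReS ReM /= => <-; apply: eq_bigr => k _; rewrite !mxE ReM /=.
  by rewrite mulr0 subr0.
have Eb : b *m M = be *: a + al *: b.
  apply/rowP => j; have := congr1 (fun m : 'rV[R[i]]_N => Im (m 0 j)) vM.
  rewrite !mxE ImS ImM /= => E; rewrite addrC -E; apply: eq_bigr => k _.
  by rewrite !mxE ImM /= mulr0 add0r.
pose Bf (x y : 'rV[R]_N) := (x *m Q *m y^T) 0 0.
have Bsym x y : Bf x y = Bf y x.
  have T : (y *m Q *m x^T)^T = x *m Q *m y^T by rewrite !trmx_mul trmxK QT mulmxA.
  by rewrite /Bf -T mxE.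
have Bge0 x : 0 <= Bf x x.
  have [->|x0] := eqVneq x 0; first by rewrite /Bf !mul0mx mxE.
  exact/ltW/Qpd.
pose K := Q *m D *m Q.
have KT : K^T = K.
  by rewrite /K !trmx_mul QT DT mulmxA.
have Cab : (a *m K *m b^T) 0 0 = al * Bf a b - be * Bf b b.
  rewrite /K !mulmxA -(mulmxA a) -/M Ea mulmxBl !mulmxBl -!scalemxAl.
  by rewrite /Bf !mxE.
have Cba : (b *m K *m a^T) 0 0 = be * Bf a a + al * Bf b a.
  by rewrite /K !mulmxA -(mulmxA b) -/M Eb !mulmxDl -!scalemxAl /Bf !mxE.
have Csym : (a *m K *m b^T) 0 0 = (b *m K *m a^T) 0 0.
  have T : (b *m K *m a^T)^T = a *m K *m b^T by rewrite trmx_mul trmxK trmx_mul KT mulmxA.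
  by rewrite -T mxE.
have ab0 : (a != 0) || (b != 0).
  apply: contraNT v0; rewrite negb_or !negbK => /andP[/eqP a0 /eqP b0].
  apply/eqP/rowP => j; rewrite mxE.
  have := congr1 (fun m : 'rV[R]_N => m 0 j) a0.
  have := congr1 (fun m : 'rV[R]_N => m 0 j) b0.
  rewrite !mxE; case: (v 0 j) => p q /= -> -> //.
have pos : 0 < Bf a a + Bf b b.
  case/orP: ab0 => [a0|b0].
    by apply: ltr_pwDl; [exact: Qpd | exact: Bge0].
  by apply: ltr_pwDr; [exact: Qpd | exact: Bge0].
have be0 : be = 0.
  have : be * (Bf a a + Bf b b) = 0.
    move: Csym; rewrite Cab Cba (Bsym b a) => E.
    move: E; set X := Bf a b; set Y := Bf a a; set Z := Bf b b.
    move=> E; rewrite mulrDr; lra.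
  by move/eqP; rewrite mulf_eq0 (gt_eqF pos) orbF => /eqP.
exists al; rewrite -eig_tr trmx_mul QT DT -/M; apply/eigenvalueP.
case/orP: ab0 => [a0|b0].
  by exists a => //; rewrite Ea be0 scale0r subr0.
by exists b => //; rewrite Eb be0 scale0r add0r.
Qed.
Lemma eig_scale n (A : 'M[R]_n) t x : t != 0 ->
  eigenvalue (t *: A) x = eigenvalue A (x / t).
Proof.
move=> t0; rewrite !eigE.
have -> : t *: A - x%:M = t *: (A - (x / t)%:M).
  by rewrite scalerBr scale_scalar_mx mulrC mulfVK.
by rewrite detZ mulf_eq0 expf_eq0 (negbTE t0) andbF.
Qed.

Lemma eig_block n (A : 'M[R]_n) c x :
  eigenvalue (block_mx A 0 0 (c%:M : 'M_1)) x = eigenvalue A x || (x == c).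
Proof.
rewrite !eigE [x%:M](@scalar_mx_block _ n 1) opp_block_mx add_block_mx.
rewrite !oppr0 !addr0 det_ublock mulf_eq0 -(@raddfB _ _ (@scalar_mx _ 1)) det_scalar1.
by rewrite [c - x == 0]subr_eq0 [c == x]eq_sym.
Qed.

Lemma mxdiag_scale s (n : 'I_s -> nat) (a : R) (B : forall i, 'M[R]_(n i)) :
  \mxdiag_i (a *: B i) = a *: \mxdiag_i B i.
Proof.
apply/matrixP => x y; rewrite /mxdiag /mxblock !mxE.
case: eqP => _; last by rewrite !mxE mulr0.
have E : forall m k (M : 'M[R]_(m,k)), a *: M = map_mx ( *%R a) M.
  by move=> m k M; apply/matrixP => i j; rewrite !mxE.
rewrite E.
have Z : (0 : 'M[R]_(n (tagnat.sig1 x), n (tagnat.sig1 y))) = map_mx ( *%R a) 0.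
  by apply/matrixP => i j; rewrite !mxE mulr0.
by rewrite [in LHS]Z -map_conform_mx mxE.
Qed.

Lemma eig_lb n (A : 'M[R]_n) : has_lbound [set a | eigenvalue A a].
Proof.
exists (- cauchy_bound (char_poly A)) => x /=; rewrite eigenvalue_root_char => /eqP rx.
have := cauchy_boundP (monic_neq0 (char_poly_monic A)) rx.
by move/ltW; rewrite ler_norml => /andP[].
Qed.

Lemma inf_form (E S : set R) t c : (E !=set0)%classic -> has_lbound E -> 0 < t ->
  (forall x, S x <-> (exists2 e, E e & x = t * e) \/ x = c) ->
  inf S = Num.min (t * inf E) c.
Proof.
move=> E0 lbE t0 HS.
have Sc : S c by apply/HS; right.
have lbS : lbound S (Num.min (t * inf E) c).
  move=> x /HS [[e Ee ->]|->]; rewrite ge_min ?lexx ?orbT //.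
  by rewrite ler_pM2l // (ge_inf lbE Ee).
have hS : has_lbound S by exists (Num.min (t * inf E) c).
apply/le_anti/andP; split; last by apply: lb_le_inf => //; exists c.
rewrite le_min; apply/andP; split; last exact: (ge_inf hS Sc).
rewrite -ler_pdivrMl //; apply: lb_le_inf => // e Ee.
rewrite ler_pdivrMl //; apply: (ge_inf hS); apply/HS; left; by exists e.
Qed.

Lemma Dblock_sym s (n : 'I_s -> nat) (Q : 'M[R]_(\sum_i n i)) p :
  Q^T = Q -> (Dblock Q p)^T = Dblock Q p.
Proof.
move=> QT; rewrite /Dblock tr_mxdiag; apply: eq_mxdiag => i.
by rewrite linearZ /= trmx_inv tr_submxblock QT.
Qed.

Lemma PG_ne s (n : 'I_s -> nat) (Q : 'M[R]_(\sum_i n i)) p :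
  posdef Q -> (0 < \sum_i n i)%N ->
  ([set a | eigenvalue (Dblock Q p *m Q) a] !=set0)%classic.
Proof.
move=> [QT Qpd] N0; have [a Ha] := @real_eig _ Q (Dblock Q p) N0 QT (@Dblock_sym _ _ _ p QT) Qpd.
by exists a.
Qed.

Lemma fext_form s (n : 'I_s -> nat) (Q : 'M[R]_(\sum_i n i)) w :
  posdef Q -> (0 < \sum_i n i)%N -> 0 < \sum_i w i ->
  fext Q w = Num.min ((\sum_i w i) * PG Q (fun i => w i / \sum_i w i))
                     (1 - \sum_i w i).
Proof.
move=> Qp N0 t0; set t := \sum_i w i; set p := fun i => _.
rewrite /fext /PG /lambda_min -/t; apply: inf_form => //.
- exact: PG_ne.
- exact: eig_lb.
move=> x /=; rewrite mulmx_block !mulmx0 !mul0mx !addr0 add0r mulmx1 eig_block.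
have -> : Dblock Q w = t *: Dblock Q p.
  rewrite /Dblock -mxdiag_scale; apply: eq_mxdiag => i.
  by rewrite scalerA /p mulrC divfK // gt_eqF.
rewrite -scalemxAl eig_scale; last by rewrite gt_eqF.
split.
  case/orP => [H|/eqP ->]; last by right.
  by left; exists (x / t) => //; rewrite mulrC divfK // gt_eqF.
case => [[e He ->]|->]; last by rewrite eqxx orbT.
by rewrite [t * e]mulrC (mulfK (negbT (gt_eqF t0))) He.
Qed.

End Mx.

Lemma arith (R : realType) (t m M : R) : 0 < t -> t < 1 -> m <= M ->
  (forall u, 0 < u -> u < 1 -> Num.min (u * M) (1 - u) <= Num.min (t * m) (1 - t)) ->
  m = M /\ Num.min (t * m) (1 - t) = t * M.
Proof.
move=> t0 t1 mM Fw.
  have [Mpos|Mle0] := ltP 0 M.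
    have M1 : 0 < 1 + M by rewrite addr_gt0.
    have u0 : 0 < (1 + M)^-1 by rewrite invr_gt0.
    have uE : (1 + M)^-1 + (1 + M)^-1 * M = 1.
      by rewrite -{1}[(1 + M)^-1]mulr1 -mulrDr mulVf // gt_eqF.
    move: ((1 + M)^-1) u0 uE => u u0 uE.
    have uM0 : 0 < u * M by rewrite mulr_gt0.
    have u1 : u < 1 by lra.
    have := Fw u u0 u1; rewrite (@min_l _ _ (u * M)); last by lra.
    rewrite le_min => /andP[h1 h2].
    have tu : t <= u by lra.
    have h3 : t * m <= t * M by rewrite ler_pM2l.
    have h4 : t * M <= u * M by rewrite ler_pM2r.
    have tm : t * m = t * M by lra.
    have mE : m = M by apply: (mulfI (negbT (gt_eqF t0))).
    split => //; rewrite min_l //; lra.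
  have u0 : 0 < t / 2 by lra.
  have := Fw (t / 2) u0 ltac:(lra); rewrite (@min_l _ _ (t / 2 * M)); last first.
    have : t / 2 * M <= 0 by rewrite mulr_ge0_le0 //; lra.
    lra.
  rewrite le_min => /andP[h1 h2].
  have h3 : t * m <= t * M by rewrite ler_pM2l.
  have M0 : M = 0.
    apply/le_anti; rewrite Mle0 /=.
    have : t / 2 * M <= t * M by lra.
    rewrite -subr_ge0 -mulrBl => H.
    have : 0 < t - t / 2 by lra.
    move=> H'; by rewrite -(pmulr_rge0 _ H').
  have m0 : 0 <= m.
    by move: h1; rewrite M0 mulr0 => h1; rewrite -(pmulr_rge0 _ t0).
  have mE : m = M by rewrite M0; apply/le_anti; rewrite m0 -M0 mM.
  by split => //; rewrite mE M0 mulr0 min_l //; lra.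
Qed.

Theorem proposition2 (R : realType) (s : nat) (n : 'I_s -> nat)
  (Q : 'M[R]_(\sum_(i < s) n i))
  (n_pos : forall i, (0 < n i)%N)
  (Q_pd : posdef Q)
  (popt : 'I_s -> R)
  (popt_prob : posprob popt)
  (popt_max : forall p, posprob p -> PG Q p <= PG Q popt)
  (popt_uniq : forall q, posprob q ->
     (forall p, posprob p -> PG Q p <= PG Q q) -> q = popt)
  (wstar : 'I_s -> R)
  (wstar_in : Delta wstar)
  (wstar_max : forall w, Delta w -> fext Q w <= fext Q wstar) :
  (forall j, popt j = wstar j / \sum_(i < s) wstar i) /\
  PG Q popt = fext Q wstar / \sum_(i < s) wstar i.
Proof.
have [popt_pos popt_sum] := popt_prob.
have [w_pos w_lt] := wstar_in.
have s0 : (0 < s)%N.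
  rewrite lt0n; apply/eqP => s0; move: popt_sum.
  have -> : \sum_(i < s) popt i = 0.
    by apply: big1 => i _; have := ltn_ord i; rewrite {2}s0.
  by move/eqP; rewrite eq_sym oner_eq0.
pose i0 : 'I_s := Ordinal s0.
have N0 : (0 < \sum_i n i)%N.
  by rewrite (bigD1 i0) //=; apply: leq_trans (n_pos i0) (leq_addr _ _).
set t := \sum_(i < s) wstar i in w_lt *.
have t0 : 0 < t.
  apply: (lt_le_trans (w_pos i0)); rewrite /t (bigD1 i0) //= lerDl.
  by apply: sumr_ge0 => i _; apply/ltW.
have t1 : t < 1 by lra.
pose pstar := fun i => wstar i / t.
have pstar_prob : posprob pstar.
  split; first by move=> i; rewrite divr_gt0.
  by rewrite /pstar -mulr_suml divff // gt_eqF.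
set M := PG Q popt.
set m := PG Q pstar.
have mM : m <= M by apply: popt_max.
have Fst : fext Q wstar = Num.min (t * m) (1 - t) by rewrite fext_form.
have Fw : forall u, 0 < u -> u < 1 -> Num.min (u * M) (1 - u) <= Num.min (t * m) (1 - t).
  move=> u u0 u1.
  have wD : Delta (fun i => u * popt i).
    split; first by move=> i; rewrite mulr_gt0.
    by rewrite -mulr_sumr popt_sum mulr1 subr_gt0.
  have := wstar_max _ wD; rewrite Fst fext_form //; last first.
    by rewrite -mulr_sumr popt_sum mulr1.
  rewrite -mulr_sumr popt_sum mulr1.
  have -> : (fun i => u * popt i / u) = popt.
    by apply: funext => i; rewrite mulrC mulKf // gt_eqF.
  by [].
have [mE FE] := @arith _ t m M t0 t1 mM Fw.
have Hp : pstar = popt.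
  apply: (popt_uniq pstar pstar_prob) => p pp.
  have H := popt_max p pp.
  rewrite -/M -mE in H.
  exact: H.
split; first by move=> j; rewrite -Hp.
rewrite Fst FE [t * M]mulrC (mulfK (negbT (gt_eqF t0))).
reflexivity.
Qed.
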